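(* On the exterior Kerr spacetime (Boyer–Lindquist coordinates, region $\Delta>0$, $0<\theta<\pi$), for any constant $u_0$, the 2-form $$\frac{u_0}{\Delta}\,dr\wedge\big(a\,dt-(r^2+a^2)\,d\varphi\big)$$ is a vacuum solution of Maxwell's equations, i.e. it is closed and its current density vector vanishes.
   Context: The Kerr metric with mass $M$ and spin $a$ in Boyer–Lindquist coordinates $(t,r,\theta,\varphi)$ is $ds^2=g_{tt}dt^2+2g_{t\varphi}dt\,d\varphi+\frac{\rho^2}{\Delta}dr^2+\rho^2d\theta^2+\frac{\Sigma^2\sin^2\theta}{\rho^2}d\varphi^2$, with $g_{tt}=-1+\frac{2Mr}{\rho^2}$, $g_{t\varphi}=-\frac{2Mra\sin^2\theta}{\rho^2}$, $\rho^2=r^2+a^2\cos^2\theta$, $\Delta=r^2-2Mr+a^2$, $\Sigma^2=(r^2+a^2)^2-\Delta a^2\sin^2\theta$. For a 2-form $F$, the current density vector is $j^\nu=-\nabla_\mu F^{\mu\nu}$ with $\nabla$ the Levi-Civita connection. *)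

(* Defs.v *)
(* R : realType, points of the chart are row vectors
   'rV[R]_4 with coordinates (t, r, theta, phi) = indices 0,1,2,3. *)
From HB Require Import structures.
From mathcomp Require Import all_boot all_order all_algebra.
From mathcomp Require Import all_classical all_reals all_analysis.
Set Implicit Arguments. Unset Strict Implicit. Unset Printing Implicit Defensive.
Import Order.TTheory GRing.Theory Num.Theory.
Import numFieldNormedType.Exports.
Local Open Scope ring_scope.

Section Kerr.
Variable R : realType.

Definition it : 'I_4 := @Ordinal 4 0 isT.
Definition ir : 'I_4 := @Ordinal 4 1 isT.
Definition ith : 'I_4 := @Ordinal 4 2 isT.
Definition iph : 'I_4 := @Ordinal 4 3 isT.

Definition blc (x : 'rV[R]_4) (i : 'I_4) : R := x ord0 i.

Definition pd (i : 'I_4) (f : 'rV[R]_4 -> R) (x : 'rV[R]_4) : R :=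
  'D_(delta_mx ord0 i) f x.

Definition rho2 (a r th : R) : R := r ^+ 2 + a ^+ 2 * (cos th) ^+ 2.
Definition Delta (M a r : R) : R := r ^+ 2 - 2 * M * r + a ^+ 2.
Definition Sigma2 (M a r th : R) : R :=
  (r ^+ 2 + a ^+ 2) ^+ 2 - Delta M a r * a ^+ 2 * (sin th) ^+ 2.

Definition kerr_metric (M a : R) (x : 'rV[R]_4) : 'M[R]_4 :=
  let r := blc x ir in let th := blc x ith in
  \matrix_(i < 4, j < 4)
    match nat_of_ord i, nat_of_ord j with
    | 0%N, 0%N => -1 + 2 * M * r / rho2 a r th
    | 0%N, 3%N | 3%N, 0%N => - (2 * M * r * a * (sin th) ^+ 2 / rho2 a r th)
    | 1%N, 1%N => rho2 a r th / Delta M a r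
    | 2%N, 2%N => rho2 a r th
    | 3%N, 3%N => Sigma2 M a r th * (sin th) ^+ 2 / rho2 a r th
    | _, _ => 0
    end.

Definition ginv (g : 'rV[R]_4 -> 'M[R]_4) (x : 'rV[R]_4) : 'M[R]_4 := invmx (g x).

Definition Gamma (g : 'rV[R]_4 -> 'M[R]_4) (x : 'rV[R]_4) (l m n : 'I_4) : R :=
  2^-1 * \sum_(s < 4) ginv g x l s *
     (pd m (fun y => g y s n) x + pd n (fun y => g y s m) x
      - pd s (fun y => g y m n) x).

(* 2-forms are represented by their antisymmetric component matrices F_{mu nu},
   F = 1/2 F_{mu nu} dx^mu /\ dx^nu.  1-forms by component rows alpha_mu. *)
Definition dx (i : 'I_4) : 'rV[R]_4 := delta_mx ord0 i.
Definition wedge (al be : 'rV[R]_4) : 'M[R]_4 :=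
  \matrix_(i < 4, j < 4) (al ord0 i * be ord0 j - al ord0 j * be ord0 i).

Definition Fup (g : 'rV[R]_4 -> 'M[R]_4) (F : 'rV[R]_4 -> 'M[R]_4)
  (x : 'rV[R]_4) (m n : 'I_4) : R :=
  \sum_(p < 4) \sum_(q < 4) ginv g x m p * ginv g x n q * F x p q.

(* nabla_mu T^{mu nu} for the (2,0)-tensor T = F^{..} *)
Definition divF (g F : 'rV[R]_4 -> 'M[R]_4) (x : 'rV[R]_4) (n : 'I_4) : R :=
  \sum_(m < 4) (pd m (fun y => Fup g F y m n) x
    + \sum_(l < 4) Gamma g x m m l * Fup g F x l n
    + \sum_(l < 4) Gamma g x n m l * Fup g F x m l).

Definition current (g F : 'rV[R]_4 -> 'M[R]_4) (x : 'rV[R]_4) (n : 'I_4) : R :=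
  - divF g F x n.

Definition closed2 (F : 'rV[R]_4 -> 'M[R]_4) (x : 'rV[R]_4) : Prop :=
  forall l m n : 'I_4,
    pd l (fun y => F y m n) x + pd m (fun y => F y n l) x
    + pd n (fun y => F y l m) x = 0.

Definition maxF (M a u0 : R) (x : 'rV[R]_4) : 'M[R]_4 :=
  let r := blc x ir in
  (u0 / Delta M a r) *: wedge (dx ir) (a *: dx it - (r ^+ 2 + a ^+ 2) *: dx iph).

End Kerr.

(* Main.v *)
Require Import Defs.
From HB Require Import structures.
From mathcomp Require Import all_boot all_order all_algebra.
From mathcomp Require Import all_classical all_reals all_analysis.
From mathcomp Require Import ring lra.
Import Order.TTheory GRing.Theory Num.Theory.
Import numFieldNormedType.Exports.
Local Open Scope ring_scope.
Set Implicit Arguments. Unset Strict Implicit.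


Section D.
Variable R : realType.
Implicit Types (f g : R -> R) (t df dg : R).

Definition isd f t df : Prop := is_derive t (1:R) f df.

Lemma dcst (c t : R) : isd (fun _ : R => c) t 0.
Proof. exact: is_derive_cst. Qed.
Lemma did t : isd (fun h : R => h) t 1.
Proof. exact: is_derive_id. Qed.
Lemma dadd f g t df dg : isd f t df -> isd g t dg ->
  isd (fun h => f h + g h) t (df + dg).
Proof. move=> Hf Hg; exact: (is_deriveD Hf Hg). Qed.
Lemma dopp f t df : isd f t df -> isd (fun h => - f h) t (- df).
Proof. move=> Hf; exact: (is_deriveN Hf). Qed.
Lemma dmul f g t df dg : isd f t df -> isd g t dg ->
  isd (fun h => f h * g h) t (f t * dg + g t * df).
Proof. move=> Hf Hg; exact: (is_deriveM Hf Hg). Qed.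
Lemma dexp f t df : isd f t df -> isd (fun h => f h ^+ 2) t (2 * f t * df).
Proof.
move=> Hf; rewrite (_ : (fun h => f h ^+ 2) = (fun h => f h * f h)); last first.
  by apply: funext => h; rewrite expr2.
apply: (is_derive_eq (dmul Hf Hf)); ring.
Qed.
Lemma dinv f t df : f t != 0 -> isd f t df ->
  isd (fun h => (f h)^-1) t (- (f t) ^-2 * df).
Proof.
move=> H0 Hf; have Hd : derivable f t 1 by case: Hf.
apply: DeriveDef; first exact: derivableV.
rewrite deriveV //; by case: Hf => _ ->.
Qed.

Lemma D1_of f t df D : isd f t df -> df = D -> 'D_1 f t = D.
Proof. by case=> _ -> ->. Qed.

Lemma near_nz f df : isd f 0 df -> f 0 != 0 -> \forall h \near 0, f h != 0.
Proof.
move=> Hd Hf.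
have Hd2 : derivable f 0 1 by case: Hd.
have Hc : {for 0, continuous f}.
  exact/differentiable_continuous/derivable1_diffP.
exact: (cvgr_neq0 (f 0) Hc Hf).
Qed.
End D.

Ltac dstep := first
  [ apply: dcst | apply: did | apply: dadd | apply: dopp | apply: dexp
  | apply: dinv | apply: dmul ].
Ltac dtac := repeat dstep.

Lemma ord4P (P : 'I_4 -> Prop) : P it -> P ir -> P ith -> P iph -> forall i, P i.
Proof.
move=> H0 H1 H2 H3 [[|[|[|[|k]]]] Hk].
- by rewrite (_ : Ordinal Hk = it) //; apply: val_inj.
- by rewrite (_ : Ordinal Hk = ir) //; apply: val_inj.
- by rewrite (_ : Ordinal Hk = ith) //; apply: val_inj.
- by rewrite (_ : Ordinal Hk = iph) //; apply: val_inj.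
- by [].
Qed.

Section K.
Variable R : realType.
Implicit Types (x y : 'rV[R]_4).
Variables M a : R.

Lemma kerr_sym y i j : kerr_metric M a y i j = kerr_metric M a y j i.
Proof. rewrite !mxE; move: i j; apply: ord4P; apply: ord4P => //. Qed.

Definition kA r th : R := -1 + 2 * M * r / rho2 a r th.
Definition kB r th : R := - (2 * M * r * a * (sin th) ^+ 2 / rho2 a r th).
Definition kC r th : R := Sigma2 M a r th * (sin th) ^+ 2 / rho2 a r th.
Definition kDD r th : R := - (Delta M a r * sin th ^+ 2).

Definition Gexp r th : 'M[R]_4 :=
  \matrix_(i < 4, j < 4)
    match nat_of_ord i, nat_of_ord j with
    | 0%N, 0%N => kC r th / kDD r th
    | 0%N, 3%N | 3%N, 0%N => - kB r th / kDD r th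
    | 1%N, 1%N => Delta M a r / rho2 a r th
    | 2%N, 2%N => 1 / rho2 a r th
    | 3%N, 3%N => kA r th / kDD r th
    | _, _ => 0
    end.

Lemma kerr_mul y : Delta M a (blc y ir) != 0 -> sin (blc y ith) != 0 ->
  rho2 a (blc y ir) (blc y ith) != 0 ->
  kerr_metric M a y *m Gexp (blc y ir) (blc y ith) = 1%:M.
Proof.
move=> HD Hs Hr.
apply/matrixP => i j; rewrite !mxE !big_ord_recl big_ord0 !mxE.
move: i j; apply: ord4P; apply: ord4P => /=.
all: move: HD Hs Hr; move: (blc y ir) (blc y ith) => r th.
all: rewrite /kDD /kA /kB /kC /Sigma2 /Delta /rho2 cos2sin2 => HD Hs Hr.
all: rewrite /= ?mul0r ?mulr0 ?add0r ?addr0.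
all: try field.
all: by rewrite ?HD ?Hs ?Hr.
Qed.

Lemma kerr_inv y : Delta M a (blc y ir) != 0 -> sin (blc y ith) != 0 ->
  rho2 a (blc y ir) (blc y ith) != 0 ->
  invmx (kerr_metric M a y) = Gexp (blc y ir) (blc y ith).
Proof.
move=> HD Hs Hr; have H := kerr_mul HD Hs Hr.
have [Hu _] := mulmx1_unit H.
by rewrite -[RHS]mul1mx -(mulVmx Hu) -mulmxA H mulmx1.
Qed.

Variable u0 : R.

Lemma Fup_E y : Delta M a (blc y ir) != 0 -> sin (blc y ith) != 0 ->
  rho2 a (blc y ir) (blc y ith) != 0 ->
  Fup (kerr_metric M a) (maxF M a u0) y ir it = - (a * u0 / rho2 a (blc y ir) (blc y ith)) /\
  Fup (kerr_metric M a) (maxF M a u0) y ir iph =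
    - (u0 / (rho2 a (blc y ir) (blc y ith) * sin (blc y ith) ^+ 2)).
Proof.
move=> HD Hs Hr; rewrite /Fup /ginv kerr_inv //.
rewrite !big_ord_recl !big_ord0 !mxE /=.
move: HD Hs Hr; move: (blc y ir) (blc y ith) => r th.
rewrite /kDD /kA /kB /kC /Sigma2 /Delta /rho2 cos2sin2 => HD Hs Hr.
by split; field; rewrite ?HD ?Hs ?Hr.
Qed.


Lemma blc_line (i j : 'I_4) (h : R) x :
  blc (h *: dx R i + x) j = (if j == i then h else 0) + blc x j.
Proof. by rewrite /blc /dx !mxE eqxx /=; case: eqP => _; rewrite ?mulr1 ?mulr0. Qed.

Lemma pd1 i (f : 'rV[R]_4 -> R) x :
  pd i f x = 'D_1 (fun h : R => f (h *: dx R i + x)) 0.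
Proof.
rewrite /pd /derive /=; rewrite scale0r add0r.
set d := (fun _ : R => _ *: _); set d' := (fun _ : R => _ *: _).
suff -> : d = d' by []. apply: funext => h; rewrite /d /d' /=.
by rewrite addr0 [_%:A]mulr1.
Qed.

Lemma pd_inv i (f : 'rV[R]_4 -> R) x :
  (forall h, f (h *: dx R i + x) = f x) -> pd i f x = 0.
Proof.
move=> H; rewrite pd1 (_ : (fun h : R => _) = cst (f x)) ?derive_cst //.
by apply: funext => h; rewrite H.
Qed.


End K.


Section K2.
Variable R : realType.
Variables M a u0 : R.
Implicit Types (x y : 'rV[R]_4).

Lemma ginv_sym y i j :
  invmx (kerr_metric M a y) i j = invmx (kerr_metric M a y) j i.
Proof.
have HT : (kerr_metric M a y)^T = kerr_metric M a y.
  by apply/matrixP => p q; rewrite mxE kerr_sym.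
by rewrite -[in RHS]HT -trmx_inv mxE.
Qed.

Lemma maxF_anti y i j : maxF M a u0 y i j = - maxF M a u0 y j i.
Proof. rewrite !mxE; ring. Qed.

Lemma maxF_row2 y q : maxF M a u0 y ith q = 0.
Proof. rewrite !mxE /=; ring. Qed.

Lemma Fup_anti (g F : 'rV[R]_4 -> 'M[R]_4) y m n :
  (forall i j, F y i j = - F y j i) -> Fup g F y m n = - Fup g F y n m.
Proof.
move=> HF; rewrite /Fup [in RHS]exchange_big -sumrN; apply: eq_bigr => p _.
rewrite -sumrN; apply: eq_bigr => q _; rewrite HF; ring.
Qed.

Lemma kerr_col2 y k : k != ith -> kerr_metric M a y k ith = 0.
Proof. by rewrite mxE; move: k; apply: ord4P. Qed.

Lemma kerr_22 y : kerr_metric M a y ith ith = rho2 a (blc y ir) (blc y ith).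
Proof. by rewrite mxE. Qed.

Lemma ginv_col y p : p != ith -> invmx (kerr_metric M a y) ith p = 0.
Proof.
move=> Hp; set K := kerr_metric M a y.
case Hu: (K \in unitmx); last first.
  rewrite invmx_out; last by rewrite inE Hu.
  rewrite /K mxE; move: p Hp; apply: ord4P => //.
rewrite ginv_sym.
have E := mulVmx Hu.
have E1 := congr1 (fun A : 'M[R]_4 => A p ith) E.
have E2 := congr1 (fun A : 'M[R]_4 => A ith ith) E.
have Hs : forall q, \sum_k invmx K q k * K k ith = invmx K q ith * rho2 a (blc y ir) (blc y ith).
  move=> q; rewrite (bigD1 ith) //= big1 ?addr0 ?/K ?kerr_22 // => k Hk.
  by rewrite kerr_col2 ?mulr0.
move: E1 E2; rewrite !mxE !Hs (negbTE Hp) eqxx => E1 E2.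
have Hr : rho2 a (blc y ir) (blc y ith) != 0.
  apply/eqP => H0; move: E2; rewrite H0 mulr0 => /eqP.
  by rewrite eq_sym oner_eq0.
by move/eqP: E1; rewrite mulf_eq0 (negbTE Hr) orbF => /eqP.
Qed.

Lemma Fup_row2 y n :
  Fup (kerr_metric M a) (maxF M a u0) y ith n = 0.
Proof.
rewrite /Fup big1 // => p _; rewrite big1 // => q _.
case: (eqVneq p ith) => [->|Hp]; first by rewrite maxF_row2 mulr0.
by rewrite /ginv ginv_col // !mul0r.
Qed.

End K2.


Section G.
Variable R : realType.
Implicit Types (x y : 'rV[R]_4) (g F : 'rV[R]_4 -> 'M[R]_4).

Lemma sum4 (Fn : 'I_4 -> R) : \sum_(i < 4) Fn i = Fn it + Fn ir + Fn ith + Fn iph.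
Proof.
rewrite !big_ord_recl big_ord0 addr0 !addrA.
by congr (_ + _ + _ + _); congr Fn; apply: val_inj.
Qed.

Lemma Gamma_sym g x n m l : (forall y i j, g y i j = g y j i) ->
  Gamma g x n m l = Gamma g x n l m.
Proof.
move=> Hg; rewrite /Gamma; congr (_ * _); apply: eq_bigr => s _; congr (_ * _).
rewrite (_ : (fun y => g y m l) = (fun y => g y l m)); last first.
  by apply: funext => y; rewrite Hg.
by rewrite [X in X - _]addrC.
Qed.

Lemma third_zero g F x n : (forall y i j, g y i j = g y j i) ->
  (forall i j, F x i j = - F x j i) ->
  \sum_(m < 4) \sum_(l < 4) Gamma g x n m l * Fup g F x m l = 0.
Proof.
move=> Hg HF; set S := (X in X = 0).
have HS : S = - S.
  rewrite /S [in LHS]exchange_big -sumrN; apply: eq_bigr => m _.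
  rewrite -sumrN; apply: eq_bigr => l _.
  by rewrite Gamma_sym // (Fup_anti _ _ _ HF) mulrN.
lra.
Qed.

Lemma contract g x l : (forall i j, ginv g x i j = ginv g x j i) ->
  \sum_(m < 4) Gamma g x m m l =
  2^-1 * \sum_(m < 4) \sum_(s < 4) ginv g x m s * pd l (fun y => g y s m) x.
Proof.
move=> HG; rewrite /Gamma -mulr_sumr; congr (_ * _).
have E : \sum_(m < 4) \sum_(s < 4) ginv g x m s * pd m (fun y => g y s l) x =
         \sum_(m < 4) \sum_(s < 4) ginv g x m s * pd s (fun y => g y m l) x.
  rewrite [RHS]exchange_big /=; apply: eq_bigr => m _; apply: eq_bigr => s _.
  by rewrite HG.
have -> : \sum_(m < 4) \sum_(s < 4) ginv g x m s *
      (pd m (fun y => g y s l) x + pd l (fun y => g y s m) x - pd s (fun y => g y m l) x)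
  = \sum_(m < 4) \sum_(s < 4) ginv g x m s * pd m (fun y => g y s l) x
  + \sum_(m < 4) \sum_(s < 4) ginv g x m s * pd l (fun y => g y s m) x
  - \sum_(m < 4) \sum_(s < 4) ginv g x m s * pd s (fun y => g y m l) x.
  rewrite -big_split -sumrB; apply: eq_bigr => m _.
  rewrite -big_split -sumrB; apply: eq_bigr => s _; by rewrite mulrBr mulrDr.
rewrite E; ring.
Qed.

End G.


Section K4.
Variable R : realType.
Variables M a u0 : R.
Variable x : 'rV[R]_4.
Let r0 := blc x ir.
Let th0 := blc x ith.
Hypothesis HD : Delta M a r0 != 0.
Hypothesis Hs : sin th0 != 0.
Hypothesis Hr : rho2 a r0 th0 != 0.

Lemma d00 : pd ir (fun y => kerr_metric M a y it it) x =
  2 * M / rho2 a r0 th0 - 2 * M * r0 * (2 * r0) / rho2 a r0 th0 ^+ 2.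
Proof.
rewrite pd1 (_ : (fun h : R => _) =
  (fun h => -1 + 2 * M * (h + r0) / rho2 a (h + r0) th0)); last first.
  by apply: funext => h; rewrite mxE !blc_line /= add0r.
move: Hr; rewrite /rho2 => Hr'.
apply: D1_of; first dtac.
- by rewrite /= add0r.
- rewrite /= ?add0r ?mulr1 ?addr0 ?mulr0; field; by rewrite exprMn Hr'.
Qed.

Lemma Hr' : r0 ^+ 2 + a ^+ 2 * cos th0 ^+ 2 != 0.
Proof. exact: Hr. Qed.
Lemma HD' : r0 ^+ 2 - 2 * M * r0 + a ^+ 2 != 0.
Proof. exact: HD. Qed.

Ltac fin := rewrite /= ?add0r ?mulr1 ?addr0 ?mulr0; field;
  rewrite ?exprMn; by rewrite ?Hr' ?HD' ?Hs.
Ltac dside := by rewrite /= ?add0r ?exprMn ?Hr' ?HD' ?Hs ?mulf_neq0 ?expf_neq0 ?Hr' ?HD' ?Hs.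

Lemma d03 : pd ir (fun y => kerr_metric M a y it iph) x =
  - (2 * M * a * sin th0 ^+ 2 / rho2 a r0 th0
     - 2 * M * r0 * a * sin th0 ^+ 2 * (2 * r0) / rho2 a r0 th0 ^+ 2).
Proof.
rewrite pd1 (_ : (fun h : R => _) =
  (fun h => - (2 * M * (h + r0) * a * sin th0 ^+ 2 / rho2 a (h + r0) th0))); last first.
  by apply: funext => h; rewrite mxE !blc_line /= add0r.
rewrite /rho2; apply: D1_of; first dtac.
- dside.
- fin.
Qed.

Lemma d30 : pd ir (fun y => kerr_metric M a y iph it) x =
  - (2 * M * a * sin th0 ^+ 2 / rho2 a r0 th0
     - 2 * M * r0 * a * sin th0 ^+ 2 * (2 * r0) / rho2 a r0 th0 ^+ 2).
Proof.
rewrite -d03; congr pd; apply: funext => y; exact: kerr_sym.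
Qed.

Lemma d11 : pd ir (fun y => kerr_metric M a y ir ir) x =
  2 * r0 / Delta M a r0 - rho2 a r0 th0 * (2 * r0 - 2 * M) / Delta M a r0 ^+ 2.
Proof.
rewrite pd1 (_ : (fun h : R => _) =
  (fun h => rho2 a (h + r0) th0 / Delta M a (h + r0))); last first.
  by apply: funext => h; rewrite mxE !blc_line /= add0r.
rewrite /rho2 /Delta; apply: D1_of; first dtac.
- dside.
- fin.
Qed.

Lemma d22 : pd ir (fun y => kerr_metric M a y ith ith) x = 2 * r0.
Proof.
rewrite pd1 (_ : (fun h : R => _) =
  (fun h => rho2 a (h + r0) th0)); last first.
  by apply: funext => h; rewrite mxE !blc_line /= add0r.
rewrite /rho2; apply: D1_of; first dtac.
fin.
Qed.

Lemma d33 : pd ir (fun y => kerr_metric M a y iph iph) x =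
  (2 * (r0 ^+ 2 + a ^+ 2) * (2 * r0) - (2 * r0 - 2 * M) * a ^+ 2 * sin th0 ^+ 2)
    * sin th0 ^+ 2 / rho2 a r0 th0
  - Sigma2 M a r0 th0 * sin th0 ^+ 2 * (2 * r0) / rho2 a r0 th0 ^+ 2.
Proof.
rewrite pd1 (_ : (fun h : R => _) =
  (fun h => Sigma2 M a (h + r0) th0 * sin th0 ^+ 2 / rho2 a (h + r0) th0)); last first.
  by apply: funext => h; rewrite mxE !blc_line /= add0r.
rewrite /rho2 /Sigma2 /Delta; apply: D1_of; first dtac.
- dside.
- fin.
Qed.

Lemma psi0 : 'D_1 (fun h : R => - (a * u0 / rho2 a (h + r0) th0)) 0 =
  a * u0 * (2 * r0) / rho2 a r0 th0 ^+ 2.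
Proof. rewrite /rho2; apply: D1_of; first dtac. - dside. - fin. Qed.

Lemma psi3 : 'D_1 (fun h : R => - (u0 / (rho2 a (h + r0) th0 * sin th0 ^+ 2))) 0 =
  u0 * (2 * r0) / (rho2 a r0 th0 ^+ 2 * sin th0 ^+ 2).
Proof. rewrite /rho2; apply: D1_of; first dtac. - dside. - fin. Qed.

Lemma Eb1 h : blc (h *: dx R ir + x) ir = h + r0.
Proof. by rewrite blc_line eqxx. Qed.
Lemma Eb2 h : blc (h *: dx R ir + x) ith = th0.
Proof. by rewrite blc_line /= add0r. Qed.

Lemma near_F : \forall h \near 0,
  Fup (kerr_metric M a) (maxF M a u0) (h *: dx R ir + x) ir it =
    - (a * u0 / rho2 a (h + r0) th0) /\
  Fup (kerr_metric M a) (maxF M a u0) (h *: dx R ir + x) ir iph =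
    - (u0 / (rho2 a (h + r0) th0 * sin th0 ^+ 2)).
Proof.
have N1 : \forall h \near 0, Delta M a (h + r0) != 0.
  apply: near_nz; [rewrite /Delta; dtac | by rewrite /= add0r].
have N2 : \forall h \near 0, rho2 a (h + r0) th0 != 0.
  apply: near_nz; [rewrite /rho2; dtac | by rewrite /= add0r].
move: N1 N2; apply: filterS2 => h H1 H2.
have := @Fup_E R M a u0 (h *: dx R ir + x).
rewrite !Eb1 !Eb2; exact.
Qed.

Lemma T1 : 2^-1 * \sum_(m < 4) \sum_(s < 4) ginv (kerr_metric M a) x m s *
    pd ir (fun y => kerr_metric M a y s m) x = 2 * r0 / rho2 a r0 th0.
Proof.
rewrite /ginv kerr_inv //.
rewrite !sum4 d00 d03 d30 d11 d22 d33 !mxE /= !mul0r ?addr0 ?add0r.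
have HD2 := HD; have Hs2 := Hs; have Hr2 := Hr.
move: HD2 Hs2 Hr2; rewrite /r0 /th0.
move: (blc x ir) (blc x ith) => r th.
rewrite /kDD /kA /kB /kC /Sigma2 /Delta /rho2 cos2sin2 => HD2 Hs2 Hr2.
field; by rewrite ?HD2 ?Hs2 ?Hr2.
Qed.

End K4.


Section K5.
Variable R : realType.
Variables M a u0 : R.
Implicit Types (x y : 'rV[R]_4).

Lemma kerr_line_inv i h x : ir != i -> ith != i ->
  kerr_metric M a (h *: dx R i + x) = kerr_metric M a x.
Proof.
move=> H1 H2; apply/matrixP => p q.
by rewrite !mxE !blc_line (negbTE H1) (negbTE H2) !add0r.
Qed.

Lemma maxF_line_inv i h x : ir != i -> maxF M a u0 (h *: dx R i + x) = maxF M a u0 x.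
Proof. by move=> H1; rewrite /maxF blc_line (negbTE H1) add0r. Qed.

Lemma pd_kerr0 i x s m : ir != i -> ith != i ->
  pd i (fun y => kerr_metric M a y s m) x = 0.
Proof. by move=> H1 H2; apply: pd_inv => h; rewrite kerr_line_inv. Qed.

Lemma pd_Fup0 i x m n : ir != i -> ith != i ->
  pd i (fun y => Fup (kerr_metric M a) (maxF M a u0) y m n) x = 0.
Proof.
by move=> H1 H2; apply: pd_inv => h; rewrite /Fup /ginv kerr_line_inv // maxF_line_inv.
Qed.

Lemma pd_Fup2 i x n : pd i (fun y => Fup (kerr_metric M a) (maxF M a u0) y ith n) x = 0.
Proof. by apply: pd_inv => h; rewrite !Fup_row2. Qed.

Lemma Fup_11 y : Fup (kerr_metric M a) (maxF M a u0) y ir ir = 0.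
Proof.
have := Fup_anti (kerr_metric M a) (y:=y) ir ir (maxF_anti M a u0 y); lra.
Qed.

Lemma Fup_12 y : Fup (kerr_metric M a) (maxF M a u0) y ir ith = 0.
Proof.
by rewrite (Fup_anti (kerr_metric M a) (y:=y) ir ith (maxF_anti M a u0 y)) Fup_row2 oppr0.
Qed.

Lemma T0 x l : ir != l -> ith != l ->
  \sum_(m < 4) Gamma (kerr_metric M a) x m m l = 0.
Proof.
move=> H1 H2; rewrite (contract l); last by move=> i j; rewrite /ginv ginv_sym.
rewrite big1 ?mulr0 // => m _; rewrite big1 // => s _.
by rewrite pd_kerr0 // mulr0.
Qed.

End K5.


Section K6.
Variable R : realType.
Variables M a u0 : R.
Variable x : 'rV[R]_4.
Hypothesis HD : Delta M a (blc x ir) != 0.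
Hypothesis Hs : sin (blc x ith) != 0.
Hypothesis Hr : rho2 a (blc x ir) (blc x ith) != 0.

Lemma divZ n : divF (kerr_metric M a) (maxF M a u0) x n = 0.
Proof.
rewrite /divF !big_split /=.
rewrite third_zero; [|exact: kerr_sym|exact: maxF_anti]; rewrite addr0.
have S1 : \sum_(m < 4) pd m (fun y => Fup (kerr_metric M a) (maxF M a u0) y m n) x =
   pd ir (fun y => Fup (kerr_metric M a) (maxF M a u0) y ir n) x.
  by rewrite sum4 (@pd_Fup0 _ M a u0 it x it n) // pd_Fup2 (@pd_Fup0 _ M a u0 iph x iph n) // add0r !addr0.
have S2 : \sum_(m < 4) \sum_(l < 4) Gamma (kerr_metric M a) x m m l *
     Fup (kerr_metric M a) (maxF M a u0) x l n =
   2 * blc x ir / rho2 a (blc x ir) (blc x ith) * Fup (kerr_metric M a) (maxF M a u0) x ir n.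
  rewrite exchange_big /=.
  rewrite (eq_bigr (fun l => (\sum_(m < 4) Gamma (kerr_metric M a) x m m l) *
     Fup (kerr_metric M a) (maxF M a u0) x l n)); last by move=> l _; rewrite mulr_suml.
  rewrite sum4 (@T0 _ M a x it) // (@T0 _ M a x iph) // Fup_row2.
  rewrite (contract ir); last by move=> i j; rewrite /ginv ginv_sym.
  rewrite T1 //; ring.
rewrite S1 S2; clear S1 S2; have [E0 E3] := Fup_E u0 HD Hs Hr.
have NF := near_F u0 HD Hs Hr.
move: n; apply: ord4P.
- have H : \forall h \near 0,
      Fup (kerr_metric M a) (maxF M a u0) (h *: dx R ir + x) ir it =
      - (a * u0 / rho2 a (h + blc x ir) (blc x ith)).
    by apply: filterS NF => h [].
  rewrite pd1 (near_eq_derive (1:R) H) psi0 // E0.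
  move: Hr; rewrite /rho2 => Hr'; field; by rewrite ?exprMn.
- rewrite (@pd_inv _ ir _ x); last by move=> h; rewrite !Fup_11.
  by rewrite Fup_11 mulr0 addr0.
- rewrite (@pd_inv _ ir _ x); last by move=> h; rewrite !Fup_12.
  by rewrite Fup_12 mulr0 addr0.
- have H : \forall h \near 0,
      Fup (kerr_metric M a) (maxF M a u0) (h *: dx R ir + x) ir iph =
      - (u0 / (rho2 a (h + blc x ir) (blc x ith) * sin (blc x ith) ^+ 2)).
    by apply: filterS NF => h [].
  rewrite pd1 (near_eq_derive (1:R) H) psi3 // E3.
  move: Hr; rewrite /rho2 => Hr'; field; by rewrite ?exprMn ?Hs.
Qed.

Lemma maxF_zero y m n : m != ir -> n != ir -> maxF M a u0 y m n = 0.
Proof. move=> Hm Hn; rewrite !mxE eqxx (negbTE Hm) (negbTE Hn) /=; ring. Qed.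

Lemma maxF_ii y : maxF M a u0 y ir ir = 0.
Proof. have := maxF_anti M a u0 y ir ir; lra. Qed.

Lemma Dz l m n : l != ir -> pd l (fun y => maxF M a u0 y m n) x = 0.
Proof.
move=> Hl; apply: pd_inv => h; rewrite maxF_line_inv //; by rewrite eq_sym.
Qed.

Lemma Dzz l m n : m != ir -> n != ir -> pd l (fun y => maxF M a u0 y m n) x = 0.
Proof. by move=> Hm Hn; apply: pd_inv => h; rewrite !maxF_zero. Qed.

Lemma Dii l : pd l (fun y => maxF M a u0 y ir ir) x = 0.
Proof. by apply: pd_inv => h; rewrite !maxF_ii. Qed.

Lemma derF m n : exists d, isd (fun h => maxF M a u0 (h *: dx R ir + x) m n) 0 d.
Proof.
rewrite (_ : (fun h => _) = (fun h => u0 / Delta M a (h + blc x ir) *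
   (dx R ir ord0 m * (a * dx R it ord0 n - ((h + blc x ir) ^+ 2 + a ^+ 2) * dx R iph ord0 n)
  - dx R ir ord0 n * (a * dx R it ord0 m - ((h + blc x ir) ^+ 2 + a ^+ 2) * dx R iph ord0 m)))).
  rewrite /Delta; eexists; dtac.
  by move: HD; rewrite /Delta /= add0r.
by apply: funext => h; rewrite /maxF !mxE blc_line eqxx.
Qed.

Lemma Dsum m n : pd ir (fun y => maxF M a u0 y m n) x + pd ir (fun y => maxF M a u0 y n m) x = 0.
Proof.
have [d1 H1] := derF m n; have [d2 H2] := derF n m.
rewrite !pd1 (D1_of H1 erefl) (D1_of H2 erefl).
have H3 := dadd H1 H2.
rewrite (_ : (fun h => _ + _) = (fun _ => 0)) in H3; last first.
  by apply: funext => h; rewrite (maxF_anti M a u0 _ n m) addrN.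
by rewrite -(D1_of H3 erefl) (D1_of (dcst 0 0) erefl).
Qed.

Lemma closedF : closed2 (maxF M a u0) x.
Proof.
move=> l m n.
case: (eqVneq l ir) => [->|Hl]; case: (eqVneq m ir) => [->|Hm];
  case: (eqVneq n ir) => [->|Hn].
- by rewrite !Dii !addr0.
- by rewrite Dii addr0 Dsum.
- by rewrite Dii addr0 Dsum.
- by rewrite Dzz // Dz // Dz // !addr0.
- by rewrite Dii add0r Dsum.
- by rewrite Dz // Dzz // Dz // !addr0.
- by rewrite Dz // Dz // Dzz // !addr0.
- by rewrite !Dz // !addr0.
Qed.

End K6.

Unset Implicit Arguments.

Theorem mainTheorem13 (R : realType) (M a u0 : R) (x : 'rV[R]_4) :
  0 < Delta M a (blc x ir) ->
  0 < blc x ith < pi ->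
  rho2 a (blc x ir) (blc x ith) != 0 ->
  closed2 (maxF M a u0) x /\
  (forall n : 'I_4, current (kerr_metric M a) (maxF M a u0) x n = 0).
Proof.
move=> HDp Hth Hr.
have HD : Delta M a (blc x ir) != 0 by rewrite gt_eqF.
have Hs : sin (blc x ith) != 0 by rewrite gt_eqF // sin_gt0_pi.
split; first exact: closedF.
by move=> n; rewrite /current divZ // oppr0.
Qed.
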